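(* Let $\mu^*\in\mathbb{R}^{p\times K}$ and $L^*\in\mathcal{L}_K$ with $|\mathrm{supp}(\mu^* )|\le s$, $\min_{k\ne k'}\|\mu^*_k-\mu^*_{k'}\|_2\ge c_0$ and $\|\mu^*(L^* )^T\|_F^2\le C_0sn$ for constants $c_0,C_0>0$. Let $$\widetilde{\Theta}_K=\left\{\frac{\mu L^T-\mu^*(L^* )^T}{\|\mu L^T-\mu^*(L^* )^T\|_F}:\ \mu\in\mathbb{R}^{p\times K},\ |\mathrm{supp}(\mu)|\le s,\ L\in\mathcal{L}_K,\ \mu L^T\neq\mu^*(L^* )^T\right\}.$$ Then there is a constant $C>0$ (depending only on $c_0,C_0$) such that for all $\epsilon\in(0,2]$, $$\log N(\epsilon,\widetilde{\Theta}_K,\|\cdot\|_F)\le C\left(n\log K+s\log\frac{p}{s}+sK\log n+sK\log\frac{6}{\epsilon}\right),$$ where $N(\epsilon,\cdot,\|\cdot\|_F)$ is the $\epsilon$-covering number with respect to the Frobenius norm.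
   Context: $\mathcal{L}_K$ is the set of $n\times K$ matrices $L=[l_1,\dots,l_n]^T$ with each row $l_i\in\{0,1\}^K$ having exactly one entry equal to $1$ (cluster-assignment matrices). For $\mu=[\mu_1,\dots,\mu_K]\in\mathbb{R}^{p\times K}$, $\mathrm{supp}(\mu)$ is the set of indices of the nonzero rows of $\mu$. Here $n\ge 2$, $K\ge 2$ and $1\le s\le p$. *)

(* Defs.v *)
From HB Require Import structures.
From mathcomp Require Import all_boot all_order all_algebra.
From mathcomp Require Import all_classical all_reals all_analysis.
Set Implicit Arguments. Unset Strict Implicit. Unset Printing Implicit Defensive.
Import Order.TTheory GRing.Theory Num.Theory.
Local Open Scope classical_set_scope.
Local Open Scope ring_scope.

Definition frob (R : realType) (m n : nat) (A : 'M[R]_(m, n)) : R :=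
  Num.sqrt (\sum_(i < m) \sum_(j < n) A i j ^+ 2).

Definition is_assign (R : realType) (n K : nat) (L : 'M[R]_(n, K)) : Prop :=
  forall i : 'I_n, exists k : 'I_K, forall k' : 'I_K, L i k' = (k' == k)%:R.

Definition supp (R : realType) (p K : nat) (mu : 'M[R]_(p, K)) : {set 'I_p} :=
  [set i | row i mu != 0].

Definition coldist (R : realType) (p K : nat) (mu : 'M[R]_(p, K)) (k k' : 'I_K) : R :=
  frob (col k mu - col k' mu).

Definition ThetaK (R : realType) (p n K s : nat) (mus : 'M[R]_(p, K)) (Ls : 'M[R]_(n, K))
  : set 'M[R]_(p, n) :=
  [set M | exists (mu : 'M[R]_(p, K)) (L : 'M[R]_(n, K)),
      [/\ (#|supp mu| <= s)%N, is_assign L, mu *m L^T != mus *m Ls^T &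
          M = (frob (mu *m L^T - mus *m Ls^T))^-1 *: (mu *m L^T - mus *m Ls^T)]].

Definition covering_number (R : realType) (m n : nat) (eps : R) (S : set 'M[R]_(m, n))
  : \bar R :=
  ereal_inf [set ((size F)%:R)%:E | F in
     [set F : seq 'M[R]_(m, n) |
        (forall x, x \in F -> S x) /\
        (forall M, S M -> exists2 x, x \in F & frob (M - x) <= eps)]].

(* Main.v *)
Require Import Defs.
From HB Require Import structures.
From mathcomp Require Import all_boot all_order all_algebra.
From mathcomp Require Import all_classical all_reals all_analysis.
From mathcomp Require Import ring lra.
Set Implicit Arguments. Unset Strict Implicit. Unset Printing Implicit Defensive.
Import Order.TTheory GRing.Theory Num.Theory.
Local Open Scope classical_set_scope.
Local Open Scope ring_scope.

Section SS.
Variable R : realType.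

Definition ss (a b : nat) (A : 'M[R]_(a, b)) : R := \sum_i \sum_j A i j ^+ 2.

Lemma ss_ge0 a b (A : 'M[R]_(a,b)) : 0 <= ss A.
Proof. by apply: sumr_ge0 => i _; apply: sumr_ge0 => j _; apply: sqr_ge0. Qed.

Lemma frob_le a b (A : 'M[R]_(a,b)) e : 0 <= e -> ss A <= e ^+ 2 -> frob A <= e.
Proof.
move=> e0 h; rewrite /frob -(ger0_norm e0) -sqrtr_sqr.
by rewrite ler_sqrt ?sqr_ge0.
Qed.

Lemma ss_tri a b (A B C : 'M[R]_(a,b)) :
  ss (A - B) <= 2 * ss (A - C) + 2 * ss (B - C).
Proof.
rewrite /ss !mulr_sumr -big_split /=; apply: ler_sum => i _.
rewrite !mulr_sumr -big_split /=; apply: ler_sum => j _.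
rewrite !mxE; set x := A i j; set y := B i j; set z := C i j.
have := sqr_ge0 (x + y - 2 * z); nra.
Qed.

Lemma mxsubE a b (A B : 'M[R]_(a,b)) i j : (A - B) i j = A i j - B i j.
Proof. by rewrite !mxE. Qed.

Lemma ss_eq0 a b (A : 'M[R]_(a,b)) : ss A = 0 -> A = 0.
Proof.
move=> /eqP; rewrite psumr_eq0; last by move=> i _; apply: sumr_ge0 => j _; apply: sqr_ge0.
move=> /allP h; apply/matrixP => i j; rewrite mxE.
have := h i (mem_index_enum i); rewrite implyTb psumr_eq0; last by move=> *; apply: sqr_ge0.
move=> /allP /(_ j (mem_index_enum j)); rewrite implyTb sqrf_eq0 => /eqP //.
Qed.

Lemma ssZ a b (A : 'M[R]_(a,b)) x : ss (x *: A) = x ^+ 2 * ss A.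
Proof.
rewrite /ss mulr_sumr; apply: eq_bigr => i _; rewrite mulr_sumr; apply: eq_bigr => j _.
by rewrite mxE exprMn.
Qed.

Lemma ss_frob a b (A : 'M[R]_(a,b)) : frob A ^+ 2 = ss A.
Proof. by rewrite /frob sqr_sqrtr // ss_ge0. Qed.

Lemma ss_unit a b (Y : 'M[R]_(a,b)) : Y != 0 -> ss ((frob Y)^-1 *: Y) = 1.
Proof.
move=> hY; rewrite ssZ exprVn ss_frob mulVf //.
by apply/eqP => /ss_eq0 h; move/eqP: hY.
Qed.

Lemma cover_fin (a b : nat) (I : finType) (g : I -> 'M[R]_(a,b)) (P : pred I)
   (S : set 'M[R]_(a,b)) (eps : R) : 0 <= eps ->
  (forall M, S M -> exists2 i, P i & ss (M - g i) <= eps ^+ 2 / 4) ->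
  (covering_number eps S <= (#|P|%:R)%:E)%E.
Proof.
move=> e0 hc.
pose Q i M := S M /\ ss (M - g i) <= eps ^+ 2 / 4.
pose sel i : option 'M[R]_(a,b) :=
  match pselect (exists M, Q i M) with
  | left h => Some (proj1_sig (cid h)) | right _ => None end.
have selP i M : sel i = Some M -> Q i M.
  rewrite /sel; case: pselect => // h [<-]; exact: (proj2_sig (cid h)).
pose F := pmap sel (enum P).
apply: (@le_trans _ _ ((size F)%:R)%:E).
  apply: ereal_inf_lbound; exists F => //; split.
    by move=> x; rewrite mem_pmap => /mapP [i _ /esym /selP []].
  move=> M SM; have [i Pi hi] := hc M SM.
  have : exists M, Q i M by exists M.
  move=> ex; have hs : sel i = Some (proj1_sig (cid ex)).
    rewrite /sel; case: pselect => h; last by case: (h ex).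
    by rewrite (Prop_irrelevance h ex).
  exists (proj1_sig (cid ex)).
    by rewrite mem_pmap; apply/mapP; exists i; rewrite ?mem_enum // hs.
  have [_ h2] := selP _ _ hs.
  apply: frob_le => //; apply: (le_trans (ss_tri _ _ (g i))); lra.
rewrite lee_fin ler_nat /F size_pmap.
by rewrite cardE; apply: count_size.
Qed.
End SS.
Section Count.
Variable R : realType.
Variables (p K m s Rn : nat).

Definition Et := ('I_m.+1 * bool)%type.
Definition rowT := {ffun 'I_K -> Et}.
Definition zT := {ffun 'I_p -> rowT}.
Definition r0 : rowT := [ffun => (ord0, false)].
Definition mag (e : Et) : nat := e.1.
Definition Pz (z : zT) : bool :=
  (#|[pred i | z i != r0]| <= s.*2)%N && (\sum_i \sum_k (mag (z i k)) ^ 2 <= Rn)%N.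
Definition Qs (q : R) := \sum_(e : Et) q ^+ (mag e ^ 2).

Lemma Qs_ge0 q : 0 <= q -> 0 <= Qs q.
Proof. by move=> q0; apply: sumr_ge0 => e _; apply: exprn_ge0. Qed.

Lemma count_z (q y : R) : 0 < q <= 1 -> 0 < y <= 1 ->
  \sum_(z : zT) (Pz z)%:R <= (1 + y * Qs q ^+ K) ^+ p / (q ^+ Rn * y ^+ s.*2).
Proof.
move=> /andP[q0 q1] /andP[y0 y1].
have c0 : 0 < q ^+ Rn * y ^+ s.*2 by rewrite mulr_gt0 // exprn_gt0.
pose h (r : rowT) := (if r == r0 then 1 else y) * \prod_k q ^+ (mag (r k) ^ 2).
have h0 r : 0 <= h r.
  rewrite /h mulr_ge0 //; first by case: eqP => _; rewrite ?ler01 ?ltW.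
  by apply: prodr_ge0 => k _; rewrite exprn_ge0 // ltW.
have W (z : zT) : \prod_i h (z i) =
    y ^+ #|[pred i | z i != r0]| * q ^+ (\sum_i \sum_k (mag (z i k)) ^ 2).
  rewrite /h big_split /=; congr (_ * _).
    rewrite -prodr_const [RHS]big_mkcond /=; apply: eq_bigr => i _ /=.
    by rewrite inE; case: eqP.
  rewrite (eq_bigr (fun i => q ^+ (\sum_k mag (z i k) ^ 2))) ?prodrXr // => i _.
  by rewrite prodrXr.
apply: (@le_trans _ _ (\sum_(z : zT) (\prod_i h (z i)) / (q ^+ Rn * y ^+ s.*2))).
  apply: ler_sum => z _; rewrite W.
  case hP: (Pz z) => /=; last by apply: divr_ge0; rewrite mulr_ge0 // exprn_ge0 // ltW.
  move/andP: hP => [h1 h2].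
  rewrite ler_pdivlMr // mul1r [X in _ <= X]mulrC.
  apply: ler_pM; rewrite ?exprn_ge0 ?(ltW q0) ?(ltW y0) //.
    exact: ler_wiXn2l (ltW q0) q1 _ _ h2.
  exact: ler_wiXn2l (ltW y0) y1 _ _ h1.
rewrite -mulr_suml; apply: ler_wpM2r; first by rewrite invr_ge0 ltW.
rewrite -(bigA_distr_bigA (fun (_ : 'I_p) (r : rowT) => h r)) /= prodr_const card_ord.
apply: lerXn2r; rewrite ?nnegrE ?sumr_ge0 //.
  apply: addr_ge0 => //; apply: mulr_ge0; first exact: ltW.
  by apply: exprn_ge0; apply: Qs_ge0; exact: ltW.
rewrite (@bigD1 _ _ _ _ r0) //= {1}/h eqxx mul1r.
have -> : \prod_k q ^+ (mag (r0 k) ^ 2) = 1.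
  by apply: big1 => k _; rewrite /r0 ffunE /mag /= expr0.
apply: lerD => //.
have -> : Qs q ^+ K = \sum_(r : rowT) \prod_k q ^+ (mag (r k) ^ 2).
  by rewrite -(bigA_distr_bigA (fun (_ : 'I_K) (e : Et) => q ^+ (mag e ^ 2)))
     /= prodr_const card_ord.
rewrite mulr_sumr [X in _ <= X](bigD1 r0) //=; apply: ler_wpDl.
  by apply: mulr_ge0; [exact: ltW| apply: prodr_ge0 => k _; apply: exprn_ge0; exact: ltW].
apply: ler_sum => r /negbTE hr; by rewrite /h hr.
Qed.

Lemma Qs_le (q : R) : 0 <= q < 1 -> Qs q <= 2 / (1 - q).
Proof.
move=> /andP[q0 q1].
rewrite /Qs -(pair_bigA _ (fun (j : 'I_m.+1) (b : bool) => q ^+ (mag (j, b) ^ 2))) /=.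
under eq_bigr do rewrite big_bool /=.
rewrite big_split /=.
have hG : \sum_(j < m.+1) q ^+ (j ^ 2) <= (1 - q)^-1.
  have hq : 0 < 1 - q by rewrite subr_gt0.
  apply: (@le_trans _ _ (\sum_(j < m.+1) q ^+ j)).
    apply: ler_sum => j _; apply: ler_wiXn2l => //; first exact: ltW.
    by case: (nat_of_ord j) => // k; rewrite expnS expn1 leq_pmull.
  have e := subrX1 q m.+1.
  have : (1 - q) * \sum_(j < m.+1) q ^+ j = 1 - q ^+ m.+1.
    by rewrite -opprB mulNr -e opprB.
  move=> e2; rewrite -[(1 - q)^-1]mulr1 ler_pdivlMl // e2 lerBlDr lerDl.
  exact: exprn_ge0.
rewrite /mag /=; lra.
Qed.
End Count.
Section Geo.
Variable R : realType.
Variables (p n K s : nat) (mus : 'M[R]_(p, K)) (Ls : 'M[R]_(n, K)).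
Variables (delta : R) (m : nat).
Hypothesis hd : 0 < delta.
Hypothesis hm : delta^-1 < m.+1%:R.

Definition cM := mus *m Ls^T.
Definition nk (f : 'I_n -> 'I_K) (k : 'I_K) : R := \sum_(j | f j == k) 1.
Definition mub (f : 'I_n -> 'I_K) i k := (nk f k)^-1 * \sum_(j | f j == k) cM i j.
Definition cpm (f : 'I_n -> 'I_K) : 'M[R]_(p, n) := \matrix_(i, j) (cM i j - mub f i (f j)).
Lemma cpmE f i j : cpm f i j = cM i j - mub f i (f j).
Proof. by rewrite /cpm mxE. Qed.

Definition uf f := (frob (cpm f))^-1 *: cpm f.
Definition valE (e : Et m) : R := (if e.2 then -1 else 1) * (e.1 : nat)%:R.
Definition CT := ({ffun 'I_n -> 'I_K} * 'I_m.+1 * zT p K m)%type.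
Definition gpt (c : CT) : 'M[R]_(p, n) :=
  \matrix_(i, j) (delta * valE (c.2 i (c.1.1 j)) / Num.sqrt (nk c.1.1 (c.1.1 j)))
  - (delta * (c.1.2 : nat)%:R) *: uf c.1.1.
Lemma gptE (c : CT) i j : gpt c i j =
  delta * valE (c.2 i (c.1.1 j)) / Num.sqrt (nk c.1.1 (c.1.1 j))
  - (delta * (c.1.2 : nat)%:R) * ((frob (cpm c.1.1))^-1 * cpm c.1.1 i j).
Proof. by rewrite /gpt /uf /cpm !mxE. Qed.

Definition rnd (a : R) : Et m := (inord (Num.truncn (`|a| / delta)), a < 0).

Lemma trunc_fact x : 0 <= x <= 1 ->
  (Num.truncn (x / delta) < m.+1)%N /\
  delta * (Num.truncn (x / delta))%:R <= x < delta * (Num.truncn (x / delta))%:R + delta.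
Proof.
move=> /andP[x0 x1]; have xd0 : 0 <= x / delta by rewrite divr_ge0 // ltW.
split.
  rewrite ltnS truncn_le_nat; apply: le_lt_trans hm.
  by rewrite -[X in _ <= X]mul1r ler_pM2r ?invr_gt0.
have /andP[h1 h2] := truncn_itv xd0.
have e1 : delta * (Num.truncn (x / delta))%:R <= x.
  by rewrite mulrC -ler_pdivlMr.
move: h2; rewrite -natr1 ltr_pdivrMr // => h2; apply/andP; split => //; lra.
Qed.

Lemma rnd0 : rnd 0 = (ord0, false).
Proof.
rewrite /rnd normr0 mul0r truncn0 ltxx; congr pair; apply: val_inj => /=.
by rewrite inordK.
Qed.

Lemma rnd_val a : `|a| <= 1 ->
  valE (rnd a) = (if a < 0 then -1 else 1) * (Num.truncn (`|a| / delta))%:R.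
Proof.
move=> a1; have [h _] := trunc_fact (x := `|a|) (ltac:(by rewrite normr_ge0 a1)).
by rewrite /valE /rnd /= inordK.
Qed.

Lemma rnd_err a : `|a| <= 1 -> (a - delta * valE (rnd a)) ^+ 2 <= delta ^+ 2.
Proof.
move=> a1; rewrite rnd_val //.
have [_ /andP[h1 h2]] := trunc_fact (x := `|a|) (ltac:(by rewrite normr_ge0 a1)).
move: h1 h2; set j := (Num.truncn _)%:R => h1 h2.
case: ltP => ha.
  rewrite ltr0_norm // in h1 h2; nra.
rewrite ger0_norm // in h1 h2; nra.
Qed.

Lemma rnd_mag a : `|a| <= 1 -> ((mag (rnd a)) ^ 2)%:R <= a ^+ 2 / delta ^+ 2.
Proof.
move=> a1; have [h _] := trunc_fact (x := `|a|) (ltac:(by rewrite normr_ge0 a1)).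
rewrite /mag /rnd /= inordK // natrX.
have ad0 : 0 <= `|a| / delta by rewrite divr_ge0 // ltW.
have hj : (Num.truncn (`|a| / delta))%:R <= `|a| / delta by rewrite truncn_le.
have j0 : (0:R) <= (Num.truncn (`|a| / delta))%:R by [].
move: hj j0 ad0; set y := `|a| / delta; set j := (Num.truncn y)%:R => hj j0 y0.
have : j ^+ 2 <= y ^+ 2 by nra.
by rewrite /y expr_div_n real_normK ?num_real.
Qed.

Lemma clust (f : 'I_n -> 'I_K) (G : 'I_K -> R) :
  \sum_j G (f j) = \sum_k nk f k * G k.
Proof.
rewrite (partition_big f predT) //=; apply: eq_bigr => k _.
rewrite /nk mulr_suml; apply: eq_big => // j; move=> /eqP <-; by rewrite mul1r.
Qed.

Lemma nk_ge0 f k : 0 <= nk f k.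
Proof. by apply: sumr_ge0. Qed.

Lemma nk0 f k : nk f k = 0 -> forall j, f j != k.
Proof.
move=> /eqP; rewrite psumr_eq0 // => /allP h j; apply/negP => hj.
by have := h j (mem_index_enum j); rewrite hj implyTb oner_eq0.
Qed.

Lemma orth f i k : \sum_(j | f j == k) (cM i j - mub f i k) = 0.
Proof.
rewrite sumrB sumr_const; have [h0|h0] := eqVneq (nk f k) 0.
  have e : forall P : 'I_n -> R, \sum_(j | f j == k) P j = 0.
    by move=> P; rewrite big_pred0 // => j; apply/negbTE/nk0.
  by rewrite e /mub e mulr0 mul0rn subrr.
have -> : #|[pred j | f j == k]| = #|[pred j | f j == k]| by [].
rewrite -mulr_natl.
have -> : (#|[pred j | f j == k]|%:R : R) = nk f k.
  by rewrite /nk -sum1_card natr_sum.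
by rewrite /mub mulrA mulfV // mul1r subrr.
Qed.

Lemma mul_assign (A : 'M[R]_(p, K)) (L : 'M[R]_(n, K)) (f : 'I_n -> 'I_K) :
  (forall j k, L j k = (k == f j)%:R) -> forall i j, (A *m L^T) i j = A i (f j).
Proof.
move=> hf i j; rewrite !mxE (bigD1 (f j)) //= !mxE hf eqxx mulr1 big1 ?addr0 //.
by move=> k /negbTE hk; rewrite !mxE hf hk mulr0.
Qed.


Lemma term_le (I : finType) (F : I -> R) i : (forall j, 0 <= F j) -> F i <= \sum_j F j.
Proof. by move=> h; rewrite (bigD1 i) //= ler_wpDr // sumr_ge0. Qed.

Lemma perk (c l y : R) : 0 <= c -> (c = 0 -> y = 0) ->
  c * (l - y / Num.sqrt c) ^+ 2 = (Num.sqrt c * l - y) ^+ 2.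
Proof.
move=> c0 hy; have [c00|cn] := eqVneq c 0.
  by rewrite (hy c00) c00 sqrtr0; ring.
have sc : Num.sqrt c != 0 by rewrite sqrtr_eq0 -ltNge lt0r cn.
by rewrite -{1}(sqr_sqrtr c0); field.
Qed.

Lemma approx_ (mu : 'M[R]_(p, K)) (L : 'M[R]_(n, K)) :
  (#|supp mu| <= s)%N -> (#|supp mus| <= s)%N -> is_assign L -> mu *m L^T != cM ->
  exists2 c : CT, Pz s (Num.truncn ((delta ^+ 2)^-1)) c.2 &
    ss ((frob (mu *m L^T - cM))^-1 *: (mu *m L^T - cM) - gpt c)
      <= ((s.*2 * K)%:R * 2 + 2) * delta ^+ 2.
Proof.
move=> hmu hmus hL hne.
have [f0 hf0] := choice hL.
pose f : {ffun 'I_n -> 'I_K} := [ffun j => f0 j].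
have hf j k : L j k = (k == f j)%:R by rewrite ffunE hf0.
set Y := mu *m L^T - cM.
have Yn0 : Y != 0 by rewrite subr_eq0.
set t := (frob Y)^-1.
have t0 : 0 <= t by rewrite invr_ge0 /frob sqrtr_ge0.
pose lam i k := t * (mu i k - mub f i k).
pose a i k := Num.sqrt (nk f k) * lam i k.
set fc := frob (cpm f).
have fc0 : 0 <= fc by rewrite /fc /frob sqrtr_ge0.
pose tau := t * fc.
have hM i j : (t *: Y) i j = lam i (f j) - t * cpm f i j.
  rewrite mxE /Y mxsubE (mul_assign mu hf) /lam cpmE; ring.
have ssM : ss (t *: Y) = 1 by apply: ss_unit.
have dec : ss (t *: Y) = \sum_i \sum_k a i k ^+ 2 + tau ^+ 2.
  have row_i i : \sum_j (lam i (f j) - t * cpm f i j) ^+ 2 =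
      \sum_k a i k ^+ 2 + t ^+ 2 * \sum_j cpm f i j ^+ 2.
    have o : \sum_j lam i (f j) * cpm f i j = 0.
      rewrite (partition_big f predT) //= big1 // => k _.
      rewrite (eq_bigl (fun j => f j == k)) //.
      rewrite (eq_bigr (fun j => lam i k * (cM i j - mub f i k))); last first.
        by move=> j /eqP <-; rewrite cpmE.
      by rewrite -mulr_sumr orth mulr0.
    have e j : (lam i (f j) - t * cpm f i j) ^+ 2 = lam i (f j) ^+ 2 +
        t ^+ 2 * cpm f i j ^+ 2 - 2 * t * (lam i (f j) * cpm f i j) by ring.
    rewrite (eq_bigr _ (fun j _ => e j)) sumrB big_split /= -!mulr_sumr o mulr0 subr0.
    congr (_ + _); rewrite (clust f (fun k => lam i k ^+ 2)).
    by apply: eq_bigr => k _; rewrite /a [RHS]exprMn sqr_sqrtr // nk_ge0.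
  rewrite /ss (eq_bigr _ (fun i _ => eq_bigr _ (fun j _ => congr1 (fun x => x ^+ 2) (hM i j)))).
  rewrite (eq_bigr _ (fun i _ => row_i i)) big_split /= -mulr_sumr.
  by congr (_ + _); rewrite /tau exprMn /fc ss_frob.
have Sa0 : 0 <= \sum_i \sum_k a i k ^+ 2.
  by apply: sumr_ge0 => i _; apply: sumr_ge0 => k _; apply: sqr_ge0.
have tau0 : 0 <= tau by rewrite mulr_ge0.
have Sa1 : \sum_i \sum_k a i k ^+ 2 <= 1.
  by move: dec; rewrite ssM => ->; rewrite lerDl sqr_ge0.
have tau1 : tau <= 1.
  have : tau ^+ 2 <= 1 by move: dec; rewrite ssM => ->; rewrite lerDr.
  move=> h; nra.
have a1 i k : `|a i k| <= 1.
  have h : a i k ^+ 2 <= 1.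
    have h1 := term_le (F := fun k => a i k ^+ 2) k (fun _ => sqr_ge0 _).
    have h2 := term_le (F := fun i => \sum_k a i k ^+ 2) i
      (fun i' => sumr_ge0 _ (fun k' _ => sqr_ge0 (a i' k'))).
    exact: (le_trans h1 (le_trans h2 Sa1)).
  rewrite ler_norml; apply/andP; split; nra.
pose z : zT p K m := [ffun i => [ffun k => rnd (a i k)]].
have zE i k : z i k = rnd (a i k) by rewrite !ffunE.
pose ti : 'I_m.+1 := inord (Num.truncn (tau / delta)).
pose U := supp mu :|: supp mus.
have rowE (A : 'M[R]_(p, K)) i k : i \notin supp A -> A i k = 0.
  rewrite /supp inE negbK => /eqP h.
  by have := congr1 (fun M : 'rV[R]_K => M 0 k) h; rewrite !mxE.
have zero_out i : i \notin U -> forall k, a i k = 0.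
  move=> hU k.
  have h1 : i \notin supp mu by apply: contra hU => h; apply/setUP; left.
  have h2 : i \notin supp mus by apply: contra hU => h; apply/setUP; right.
  have c0 j : cM i j = 0.
    by rewrite /cM mxE big1 // => k' _; rewrite (rowE mus) // mul0r.
  rewrite /a /lam /mub (rowE mu) // big1 => [|j _]; last exact: c0.
  by rewrite mulr0 subrr !mulr0.
have cardU : (#|U| <= s.*2)%N.
  apply: (leq_trans (leq_card_setU _ _).1); rewrite -addnn; exact: leq_add.
exists ((f, ti), z).
  apply/andP; split.
    apply: (leq_trans _ cardU) => /=; apply: subset_leq_card; apply/fintype.subsetP => i.
    rewrite inE; apply: contraR => hi; apply/eqP/ffunP => k.
    by rewrite zE zero_out // rnd0 /r0 ffunE.
  have dd0 : 0 <= (delta ^+ 2)^-1 by rewrite invr_ge0 exprn_ge0 // ltW.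
  rewrite (truncn_ge_nat _ dd0) natr_sum.
  apply: (@le_trans _ _ (\sum_i \sum_k a i k ^+ 2 / delta ^+ 2)).
    apply: ler_sum => i _; rewrite natr_sum; apply: ler_sum => k _.
    by rewrite zE; apply: rnd_mag.
  rewrite (eq_bigr (fun i => (\sum_k a i k ^+ 2) / delta ^+ 2)) => [|i _]; last first.
    by rewrite mulr_suml.
  by rewrite -mulr_suml -[X in _ <= X]mul1r; apply: ler_wpM2r.
pose X i k := lam i k - delta * valE (z i k) / Num.sqrt (nk f k).
pose w := t - delta * (ti : nat)%:R / fc.
have hE i j : (t *: Y - gpt ((f, ti), z)) i j = X i (f j) - w * cpm f i j.
  rewrite mxsubE hM gptE /X /w /=; ring.
have hv0 i k : a i k = 0 -> valE (z i k) = 0.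
  by move=> h; rewrite zE h rnd0 /valE /= mulr0.
have bA : \sum_i \sum_j X i (f j) ^+ 2 <= (#|U| * K)%:R * delta ^+ 2.
  have e i : \sum_j X i (f j) ^+ 2 = \sum_k (a i k - delta * valE (z i k)) ^+ 2.
    rewrite (clust f (fun k => X i k ^+ 2)); apply: eq_bigr => k _.
    rewrite /X perk ?nk_ge0 // => h0.
    by rewrite hv0 ?mulr0 // /a h0 sqrtr0 mul0r.
  rewrite (eq_bigr _ (fun i _ => e i)) (bigID (fun i => i \in U)) /=.
  rewrite [X in _ + X]big1 ?addr0 => [|i hi]; last first.
    by apply: big1 => k _; rewrite hv0 ?zero_out //; ring.
  apply: (@le_trans _ _ (\sum_(i in U) delta ^+ 2 *+ K)).
    apply: ler_sum => i _; apply: (@le_trans _ _ (\sum_(k < K) delta ^+ 2)).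
      by apply: ler_sum => k _; rewrite zE; apply: rnd_err.
    by rewrite sumr_const card_ord.
  by rewrite sumr_const -mulrnA mulnC mulr_natl.
have bB : w ^+ 2 * ss (cpm f) <= delta ^+ 2.
  rewrite -ss_frob -/fc; have [->|fcn] := eqVneq fc 0.
    by rewrite expr0n /= mulr0 exprn_ge0 // ltW.
  have -> : w ^+ 2 * fc ^+ 2 = (tau - delta * (ti : nat)%:R) ^+ 2.
    by rewrite /w /tau; field.
  have [h /andP[h1 h2]] := trunc_fact (x := tau) (ltac:(by rewrite tau0 tau1)).
  rewrite /ti inordK //; move: h1 h2; set j := (Num.truncn _)%:R => h1 h2; nra.
have eq : \sum_i \sum_j (2 * X i (f j) ^+ 2 + 2 * (w ^+ 2 * cpm f i j ^+ 2)) =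
    2 * \sum_i \sum_j X i (f j) ^+ 2 + 2 * (w ^+ 2 * ss (cpm f)).
  under eq_bigr do rewrite big_split /= -!mulr_sumr.
  by rewrite big_split /= -!mulr_sumr.
apply: (@le_trans _ _ (2 * \sum_i \sum_j X i (f j) ^+ 2 + 2 * (w ^+ 2 * ss (cpm f)))).
  rewrite -eq /ss; apply: ler_sum => i _; apply: ler_sum => j _.
  rewrite hE; set x := X i (f j); set y := cpm f i j.
  have := sqr_ge0 (x + w * y); nra.
have hU : (#|U| * K)%:R <= (s.*2 * K)%:R :> R by rewrite ler_nat leq_mul2r cardU orbT.
have dd : 0 <= delta ^+ 2 by rewrite exprn_ge0 // ltW.
nra.
Qed.
End Geo.

Section Num.
Variable R : realType.

Lemma expR_half : expR (1 / 2 : R) <= 2.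
Proof.
have h := expR_ge1Dx (- (1 / 2) : R); rewrite expRN in h.
have h0 := expR_gt0 (1 / 2 : R).
move: h h0; set x := expR (1/2) => h h0.
have h2 : (1 - 1/2) * x <= x^-1 * x by rewrite ler_pM2r.
rewrite mulVf ?gt_eqF // in h2; lra.
Qed.

Lemma expR1_le4 : expR (1 : R) <= 4.
Proof.
have e : (1 : R) = 1 / 2 + 1 / 2 by field.
rewrite e expRD; have h := expR_half; have h0 := expR_gt0 (1 / 2 : R); nra.
Qed.

Lemma ln_ge_half (w : R) : 2 <= w -> 1 / 2 <= ln w.
Proof.
move=> w2; rewrite -[X in X <= _]expRK ler_ln ?posrE ?expR_gt0 //; last lra.
exact: le_trans expR_half w2.
Qed.

Lemma powE (x : R) k : 0 < x -> x ^+ k = expR (k%:R * ln x).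
Proof. by move=> x0; rewrite expRM_natl lnK ?posrE. Qed.

End Num.

Lemma bern (R : realType) (w : R) k : 2 <= w -> 1 + w * k%:R <= w ^+ k.+1.
Proof.
move=> w2; elim: k => [|k IH]; first by rewrite mulr0 addr0 expr1; lra.
have h1 : w <= w ^+ k.+1.
  by rewrite -[X in X <= _]expr1; apply: ler_eXn2l => //; lra.
rewrite exprS -natr1; nra.
Qed.

Unset Implicit Arguments.

Theorem mainTheorem4 (R : realType) (c0 C0 : R) (hc0 : 0 < c0) (hC0 : 0 < C0) :
  exists2 C : R, 0 < C &
  forall (n p K s : nat), (2 <= n)%N -> (2 <= K)%N -> (1 <= s)%N -> (s <= p)%N ->
  forall (mus : 'M[R]_(p, K)) (Ls : 'M[R]_(n, K)),
    is_assign Ls ->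
    (#|supp mus| <= s)%N ->
    (forall k k' : 'I_K, k != k' -> c0 <= coldist mus k k') ->
    frob (mus *m Ls^T) ^+ 2 <= C0 * s%:R * n%:R ->
  forall eps : R, 0 < eps -> eps <= 2 ->
    (covering_number eps (ThetaK s mus Ls) <=
     (expR (C * (n%:R * ln K%:R + s%:R * ln (p%:R / s%:R)
                 + s%:R * K%:R * ln n%:R + s%:R * K%:R * ln (6 / eps))))%:E)%E.
Proof.
exists 15; first by rewrite ltr0n.
move=> n p K s hn hK hs hsp mus Ls hLs hmus hsep hfrob eps he0 he2.
have K0 : (0 < K)%N by apply: ltnW.
have p0 : (0 < p)%N by apply: leq_trans hs hsp.
set D := (s.*2 * K)%N.
have D1 : (1 <= D)%N by rewrite /D muln_gt0 double_gt0 hs.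
have Dr : (1 : R) <= D%:R by rewrite ler1n.
have DrE : (D%:R : R) = 2 * s%:R * K%:R by rewrite /D -muln2 !natrM; ring.
have sD : 0 < Num.sqrt (D%:R : R) by rewrite sqrtr_gt0 (lt_le_trans ltr01 Dr).
set delta := eps / (4 * Num.sqrt D%:R).
have hd : 0 < delta by rewrite divr_gt0 // mulr_gt0.
have dsq : delta ^+ 2 = eps ^+ 2 / (16 * D%:R).
  rewrite /delta expr_div_n exprMn sqr_sqrtr ?ler0n //; field.
  by rewrite pnatr_eq0 -lt0n.
set m := Num.truncn delta^-1.
have hm : delta^-1 < m.+1%:R by apply: truncnS_gt.
set Rn := Num.truncn (delta ^+ 2)^-1.
pose P : pred (CT p n K m) := fun c => Pz s Rn c.2.
have cov : (covering_number eps (ThetaK s mus Ls) <= (#|P|%:R)%:E)%E.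
  apply: cover_fin; first exact: ltW.
  move=> M [mu [L [h1 h2 h3 ->]]].
  have [c Pc hc] := approx_ hd hm h1 hmus h2 h3.
  exists c => //; apply: le_trans hc _.
  rewrite dsq -/D.
  have e : eps ^+ 2 / 4 = (4 * D%:R) * (eps ^+ 2 / (16 * D%:R)).
    by field; rewrite pnatr_eq0 -lt0n.
  rewrite e ler_wpM2r //; first by apply: divr_ge0; [apply: exprn_ge0; exact: ltW | apply: mulr_ge0; rewrite ?ler0n].
  lra.
apply: le_trans cov _; rewrite lee_fin.
have cardP : (#|P|%:R : R) = (K ^ n * m.+1)%:R * \sum_(z : zT p K m) (Pz s Rn z)%:R.
  rewrite -sum1_card natr_sum big_mkcond /=.
  rewrite (eq_bigr (fun c : CT p n K m => (Pz s Rn c.2)%:R)); last first.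
    by move=> c _; rewrite unfold_in /P; case: (Pz s Rn c.2).
  rewrite -(pair_bigA _ (fun (ab : {ffun 'I_n -> 'I_K} * 'I_m.+1) (z : zT p K m) =>
     (Pz s Rn z)%:R)) /= sumr_const card_prod card_ffun !card_ord mulr_natl.
  by [].
rewrite cardP.
set w := 6 / eps.
have w3 : 3 <= w by rewrite /w ler_pdivlMr //; lra.
have w0 : 0 < w by lra.
have w2 : 2 <= w by lra.
set lw := ln w.
have lw2 : 1 / 2 <= lw by apply: ln_ge_half; lra.
set al := eps ^+ 2 / 32.
have al0 : 0 < al by rewrite /al divr_gt0 // exprn_gt0.
have al1 : al <= 1 / 8.
  have : eps ^+ 2 <= 4 by nra.
  by rewrite /al; lra.
set q := (1 + al)^-1.
have q0 : 0 < q by rewrite invr_gt0; lra.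
have q1 : q < 1 by rewrite invf_lt1; lra.
set Q := Qs m q.
have Q1 : 1 <= Q.
  have := term_le (F := fun e : Et m => q ^+ (mag e ^ 2)) (ord0, false)
     (fun e => exprn_ge0 _ (ltW q0)).
  by rewrite /mag /= expr0.
have Q0 : 0 < Q by lra.
have Qw : Q <= w ^+ 4.
  apply: (le_trans (Qs_le _ _)); first by rewrite (ltW q0).
  set E := eps ^+ 2.
  have E0 : 0 < E by rewrite exprn_gt0.
  have E4 : E <= 4 by rewrite /E; nra.
  have -> : 2 / (1 - q) = (64 + 2 * E) / E.
    by rewrite /q /al -/E; field; rewrite ?gt_eqF //; lra.
  have -> : w ^+ 4 = 1296 / (E * E) by rewrite /w /E; field; rewrite gt_eqF.
  rewrite ler_pdivlMr ?mulr_gt0 //.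
  have -> : (64 + 2 * E) / E * (E * E) = (64 + 2 * E) * E by field; rewrite gt_eqF.
  nra.
set y := s%:R / (p%:R * Q ^+ K).
have pr0 : (0 : R) < p%:R by rewrite ltr0n.
have sr0 : (0 : R) < s%:R by rewrite ltr0n.
have sp : (s%:R : R) <= p%:R by rewrite ler_nat.
have QK1 : 1 <= Q ^+ K by apply: exprn_ege1.
have y0 : 0 < y by rewrite divr_gt0 // mulr_gt0 // exprn_gt0.
have y1 : y <= 1.
  rewrite ler_pdivrMr ?mulr_gt0 ?exprn_gt0 // mul1r.
  by rewrite -[X in X <= _]mulr1 ler_pM // ?ler0n //; lra.
have hcz := count_z p K m s Rn (q := q) (y := y)
  (ltac:(by rewrite q0 ltW)) (ltac:(by rewrite y0 y1)).
have K1r : (1 : R) <= K%:R by rewrite ler1n.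
have f1 : ((K ^ n)%N%:R : R) = expR (n%:R * ln K%:R).
  by rewrite natrX powE // (lt_le_trans ltr01 K1r).
have f2 : (m.+1%:R : R) <= expR ((D.+1)%:R * lw).
  rewrite /lw -(powE _ w0); apply: le_trans (bern _ w2).
  rewrite -natr1 addrC lerD2l.
  have hm1 : (m%:R : R) <= delta^-1 by rewrite truncn_le invr_ge0 ltW.
  have s1 : 1 <= Num.sqrt (D%:R : R) by rewrite -[X in X <= _]sqrtr1 ler_sqrt ?ler0n.
  have sDD : Num.sqrt (D%:R : R) <= D%:R.
    rewrite -{2}(sqr_sqrtr (ler0n _ D)) expr2; apply: ler_peMr => //; lra.
  have e : delta^-1 = (4 * Num.sqrt D%:R) / eps by rewrite /delta invf_div.
  have e2 : w * D%:R = (6 * D%:R) / eps by rewrite /w mulrAC.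
  apply: (le_trans hm1); rewrite e e2 ler_pM2r ?invr_gt0 //; lra.
have f3 : (1 + y * Q ^+ K) ^+ p <= expR s%:R.
  have -> : y * Q ^+ K = s%:R / p%:R.
    by rewrite /y invfM mulrA divfK // gt_eqF // exprn_gt0.
  have -> : expR (s%:R : R) = expR (s%:R / p%:R) ^+ p.
    by rewrite -expRM_natl mulrC divfK // gt_eqF.
  by apply: lerXn2r; rewrite ?nnegrE ?expR_ge0 ?expR_ge1Dx //.
have f4 : (q ^+ Rn)^-1 <= expR (s%:R * K%:R).
  rewrite /q exprVn invrK.
  apply: (@le_trans _ _ (expR al ^+ Rn)).
    by apply: lerXn2r; rewrite ?nnegrE ?expR_ge0 ?expR_ge1Dx //; lra.
  rewrite -expRM_natl ler_expR.
  have hR : (Rn%:R : R) <= (delta ^+ 2)^-1 by rewrite truncn_le invr_ge0 exprn_ge0 // ltW.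
  have e : (delta ^+ 2)^-1 * al = s%:R * K%:R.
    by rewrite dsq invf_div /al DrE; field; rewrite gt_eqF.
  by rewrite -e ler_wpM2r // ltW.
have f5 : (y ^+ s.*2)^-1 <= expR ((s.*2)%:R * ln (p%:R / s%:R) + (4 * (K * s.*2))%:R * lw).
  rewrite -exprVn invf_div.
  have -> : p%:R * Q ^+ K / s%:R = (p%:R / s%:R) * Q ^+ K by rewrite mulrAC.
  rewrite exprMn -exprM expRD -!powE ?divr_gt0 //.
  apply: ler_wpM2l; first by apply: exprn_ge0; apply: divr_ge0; apply: ltW.
  rewrite [X in _ <= X]exprM; apply: lerXn2r => //; rewrite nnegrE.
    by apply: ltW.
  by apply: exprn_ge0; apply: ltW.
have h1 : (K ^ n * m.+1)%:R * \sum_(z : zT p K m) (Pz s Rn z)%:R <= (K ^ n)%:R * m.+1%:R *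
    ((1 + y * Q ^+ K) ^+ p * (q ^+ Rn)^-1 * (y ^+ s.*2)^-1).
  rewrite natrM; apply: ler_wpM2l; first by rewrite mulr_ge0 ?ler0n.
  by apply: (le_trans hcz); rewrite invfM mulrA.
apply: (le_trans h1); rewrite f1.
set e5 := (s.*2)%:R * ln (p%:R / s%:R) + (4 * (K * s.*2))%:R * lw.
apply: (@le_trans _ _ (expR (n%:R * ln K%:R) * expR ((D.+1)%:R * lw) *
   (expR s%:R * expR (s%:R * K%:R) * expR e5))).
  have nn0 : 0 <= 1 + y * Q ^+ K.
    by apply: addr_ge0 => //; apply: mulr_ge0; [apply: ltW | apply: exprn_ge0; apply: ltW].
  have nn1 : 0 <= (1 + y * Q ^+ K) ^+ p by apply: exprn_ge0.
  have nn2 : 0 <= (q ^+ Rn)^-1 by rewrite invr_ge0; apply: exprn_ge0; apply: ltW.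
  have nn3 : 0 <= (y ^+ s.*2)^-1 by rewrite invr_ge0; apply: exprn_ge0; apply: ltW.
  apply: ler_pM.
  - by rewrite mulr_ge0 ?expR_ge0 ?ler0n.
  - by rewrite !mulr_ge0.
  - by apply: ler_pM => //; rewrite ?expR_ge0 ?ler0n.
  apply: ler_pM => //; first by rewrite mulr_ge0.
  by apply: ler_pM.
rewrite -!expRD ler_expR /e5.
have lK : 0 <= ln (K%:R : R) by apply: ln_ge0.
have lps : 0 <= ln (p%:R / s%:R : R) by apply: ln_ge0; rewrite ler_pdivlMr // mul1r.
have lnn : 0 <= ln (n%:R : R) by apply: ln_ge0; rewrite ler1n; apply: ltnW.
have e1 : ((D.+1)%:R : R) = 2 * s%:R * K%:R + 1 by rewrite -natr1 DrE.
have e2 : ((s.*2)%:R : R) = 2 * s%:R by rewrite -muln2 natrM mulrC.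
have e3 : ((4 * (K * s.*2))%:R : R) = 8 * (s%:R * K%:R) by rewrite -muln2 !natrM; ring.
rewrite e1 e2 e3.
have A : 0 <= n%:R * ln (K%:R : R) by rewrite mulr_ge0 ?ler0n.
have B : 0 <= s%:R * ln (p%:R / s%:R : R) by rewrite mulr_ge0 ?ler0n.
have C : 0 <= s%:R * K%:R * ln (n%:R : R) by rewrite mulr_ge0 ?mulr_ge0 ?ler0n.
have hSK : 1 <= s%:R * K%:R :> R.
  by rewrite -natrM ler1n muln_gt0 hs.
have hsle : s%:R <= s%:R * K%:R :> R by rewrite ler_peMr ?ler0n.
have hw : s%:R * K%:R / 2 <= s%:R * K%:R * lw.
  have : 0 <= s%:R * K%:R * (lw - 1/2) by rewrite mulr_ge0 ?mulr_ge0 ?ler0n //; lra.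
  lra.
have hlw : lw <= s%:R * K%:R * lw by rewrite ler_peMl //; lra.
lra.
Qed.
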